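(* For every positive integer $n$, the variety of complex $n$-dimensional nilpotent mono Leibniz algebras contains at least one rigid algebra.
   Context: An algebra is a Leibniz algebra if it satisfies $(xy)z=(xz)y+x(yz)$; it is a mono Leibniz algebra if every subalgebra generated by one element is a Leibniz algebra; it is nilpotent if for some $m$ every product of $m$ elements (any bracketing) vanishes. The variety is the Zariski-closed set of bilinear products on a fixed $n$-dimensional complex vector space $V$ (identified with structure constants in $\mathbb{C}^{n^3}$) satisfying these conditions, with $GL(V)$ acting by $(g*\mu)(x,y)=g\mu(g^{-1}x,g^{-1}y)$. An algebra is rigid if its $GL(V)$-orbit is Zariski-open in the variety. *)

(* Defs.v *)
(* Complex numbers are  C := R[i]  (mathcomp-real-closed
   `complex`) for an arbitrary  R : realType  (a complete archimedean ordered
   field, i.e. the real numbers), so C is the field of complex numbers. *)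
From HB Require Import structures.
From mathcomp Require Import all_boot all_order all_algebra.
From mathcomp Require Import reals.
From mathcomp Require complex.
From mathcomp Require mpoly.
Set Implicit Arguments. Unset Strict Implicit. Unset Printing Implicit Defensive.
Import Order.TTheory GRing.Theory Num.Theory.
Local Open Scope ring_scope.

Import complex.

Section Defs.
Variable F : fieldType.

(* A point of F^T is a function T -> F; polynomials have #|T| variables,
   variable i standing for the coordinate enum_val i. *)
Definition coords (T : finType) (x : T -> F) : 'I_#|T| -> F :=
  fun i => x (enum_val i).

Definition zeroset (T : finType) (S : mpoly.mpoly #|T| F -> Prop) (x : T -> F) : Prop :=
  forall p, S p -> mpoly.meval (coords x) p = 0.

(* O is Zariski-open relative to the subset X of F^T (subspace topology):
   X \ O is the trace on X of a Zariski-closed set V(S). *)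
Definition zariski_open_in (T : finType) (X O : (T -> F) -> Prop) : Prop :=
  exists S : mpoly.mpoly #|T| F -> Prop,
    forall x, X x -> (~ O x <-> zeroset S x).

(* mu (i, j, k) = coefficient of e_k in the product e_i e_j. *)
Local Notation triple n := (prod (prod 'I_n 'I_n) 'I_n).
Definition strconst n := triple n -> F.

Definition amul n (mu : strconst n) (x y : 'rV[F]_n) : 'rV[F]_n :=
  \row_k \sum_(i < n) \sum_(j < n) x 0 i * y 0 j * mu (i, j, k).

Definition is_leibniz_on n (mu : strconst n) (A : 'rV[F]_n -> Prop) : Prop :=
  forall x y z, A x -> A y -> A z ->
    amul mu (amul mu x y) z = amul mu (amul mu x z) y + amul mu x (amul mu y z).

Definition is_leibniz n (mu : strconst n) : Prop := is_leibniz_on mu (fun _ => True).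

Definition is_subalgebra n (mu : strconst n) (S : 'rV[F]_n -> Prop) : Prop :=
  [/\ S 0, (forall x y, S x -> S y -> S (x + y)),
      (forall (c : F) x, S x -> S (c *: x)) &
      (forall x y, S x -> S y -> S (amul mu x y))].

Definition gen_subalg n (mu : strconst n) (a : 'rV[F]_n) : 'rV[F]_n -> Prop :=
  fun v => forall S, is_subalgebra mu S -> S a -> S v.

Definition is_mono_leibniz n (mu : strconst n) : Prop :=
  forall a, is_leibniz_on mu (gen_subalg mu a).

Inductive is_product n (mu : strconst n) : nat -> 'rV[F]_n -> Prop :=
| prod_leaf x : is_product mu 1 x
| prod_node k l x y : is_product mu k x -> is_product mu l y ->
    is_product mu (k + l) (amul mu x y).

Definition is_nilpotent n (mu : strconst n) : Prop :=
  exists m, (0 < m)%N /\ forall v, is_product mu m v -> v = 0.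

Definition nilMonoLeib n : strconst n -> Prop :=
  fun mu => is_nilpotent mu /\ is_mono_leibniz mu.

(* GL(V)-action (g*mu)(x,y) = g mu(g^-1 x, g^-1 y), where the linear map of
   the invertible matrix g is x |-> x *m g. *)
Definition gl_act n (g : 'M[F]_n) (mu : strconst n) : strconst n :=
  fun t => let: (i, j, k) := t in
    (amul mu (delta_mx 0 i *m invmx g) (delta_mx 0 j *m invmx g) *m g) 0 k.

Definition orbit n (mu : strconst n) : strconst n -> Prop :=
  fun nu => exists2 g : 'M[F]_n, g \in unitmx & nu = gl_act g mu.

Definition rigid_in n (X : strconst n -> Prop) (mu : strconst n) : Prop :=
  zariski_open_in (T := triple n) X (orbit mu).

End Defs.

(* Main.v *)
Require Import Defs.
From HB Require Import structures.
From mathcomp Require Import all_boot all_order all_algebra.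
From Stdlib Require Import FunctionalExtensionality.
From mathcomp Require Import ring zify.
Set Implicit Arguments. Unset Strict Implicit. Unset Printing Implicit Defensive.
Import Order.TTheory GRing.Theory Num.Theory.
Local Open Scope ring_scope.

Section Lin.
Variable F : fieldType.
Variable n : nat.
Implicit Types (mu : strconst F n) (x y z : 'rV[F]_n).

Lemma amulDl mu x y z : amul mu (x + y) z = amul mu x z + amul mu y z.
Proof.
apply/rowP=> k; rewrite !mxE -big_split /=; apply: eq_bigr => i _.
rewrite -big_split /=; apply: eq_bigr => j _; rewrite !mxE; ring.
Qed.

Lemma amulDr mu x y z : amul mu x (y + z) = amul mu x y + amul mu x z.
Proof.
apply/rowP=> k; rewrite !mxE -big_split /=; apply: eq_bigr => i _.
rewrite -big_split /=; apply: eq_bigr => j _; rewrite !mxE; ring.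
Qed.

Lemma amulZl mu c x y : amul mu (c *: x) y = c *: amul mu x y.
Proof.
apply/rowP=> k; rewrite !mxE mulr_sumr; apply: eq_bigr => i _.
rewrite mulr_sumr; apply: eq_bigr => j _; rewrite !mxE; ring.
Qed.

Lemma amulZr mu c x y : amul mu x (c *: y) = c *: amul mu x y.
Proof.
apply/rowP=> k; rewrite !mxE mulr_sumr; apply: eq_bigr => i _.
rewrite mulr_sumr; apply: eq_bigr => j _; rewrite !mxE; ring.
Qed.

Lemma amul0l mu y : amul mu 0 y = 0.
Proof. by have := amulZl mu 0 0 y; rewrite !scale0r. Qed.

Lemma amul0r mu x : amul mu x 0 = 0.
Proof. by have := amulZr mu 0 x 0; rewrite !scale0r. Qed.

Lemma amul_suml mu m (f : 'I_m -> 'rV[F]_n) y :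
  amul mu (\sum_i f i) y = \sum_i amul mu (f i) y.
Proof. exact: (big_morph (fun x => amul mu x y) (fun a b => amulDl mu a b y) (amul0l mu y)). Qed.

Lemma amul_sumr mu m (f : 'I_m -> 'rV[F]_n) x :
  amul mu x (\sum_i f i) = \sum_i amul mu x (f i).
Proof. exact: (big_morph (fun y => amul mu x y) (fun a b => amulDr mu x a b) (amul0r mu x)). Qed.

Lemma amul_bilin mu (u v : 'rV[F]_n) (A B : 'M[F]_n) :
  amul mu (u *m A) (v *m B) =
  \sum_i \sum_j (u 0 i * v 0 j) *: amul mu (row i A) (row j B).
Proof.
rewrite (mulmx_sum_row u) (mulmx_sum_row v) amul_suml; apply: eq_bigr => i _.
rewrite amulZl amul_sumr scaler_sumr; apply: eq_bigr => j _.
by rewrite amulZr scalerA.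
Qed.

Lemma amul_delta mu i j k : amul mu (delta_mx 0 i) (delta_mx 0 j) 0 k = mu (i, j, k).
Proof.
rewrite mxE (bigD1 i) //= addrC big1 ?add0r; last first.
  by move=> i' ne; apply: big1 => j' _; rewrite !mxE (negbTE ne) /= !mul0r.
rewrite (bigD1 j) //= addrC big1 ?add0r; last first.
  by move=> j' ne; rewrite !mxE (negbTE ne) /= mulr0 mul0r.
by rewrite !mxE !eqxx /= !mul1r.
Qed.

Lemma amul_gl g mu (u v : 'rV[F]_n) :
  amul (gl_act g mu) u v = amul mu (u *m invmx g) (v *m invmx g) *m g.
Proof.
rewrite amul_bilin mulmx_suml; apply/rowP => k; rewrite summxE mxE.
apply: eq_bigr => i _; rewrite mulmx_suml summxE; apply: eq_bigr => j _.
by rewrite -scalemxAl mxE /gl_act !rowE.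
Qed.

Lemma amul_gl_unit g mu (u v : 'rV[F]_n) : g \in unitmx ->
  amul (gl_act g mu) (u *m g) (v *m g) = amul mu u v *m g.
Proof. by move=> gU; rewrite amul_gl !mulmxK. Qed.

Lemma gl_charac g mu nu : g \in unitmx ->
  (forall i j, amul nu (row i g) (row j g) = amul mu (row i 1%:M) (row j 1%:M) *m g) ->
  nu = gl_act g mu.
Proof.
move=> gU H; apply: functional_extensionality => -[[i j] k].
have E : forall u v : 'rV[F]_n, amul nu (u *m g) (v *m g) = amul mu u v *m g.
  move=> u v; rewrite amul_bilin -{2}(mulmx1 u) -{2}(mulmx1 v) amul_bilin.
  rewrite mulmx_suml; apply: eq_bigr => i' _; rewrite mulmx_suml; apply: eq_bigr => j' _.
  by rewrite H scalemxAl.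
rewrite /gl_act -amul_delta -E !mulmxKV //.
Qed.

End Lin.
From mathcomp Require Import reals.
From mathcomp Require complex.
Section Mu0.
Variable F : fieldType.
Variable n : nat.

Definition shiftm : 'M[F]_n.+1 := \matrix_(i, k) ((k : nat) == i.+1)%:R.
Definition mu0 : strconst F n.+1 :=
  fun t => if ((t.1.2 : nat) == 0%N) && ((t.2 : nat) == (t.1.1).+1) then 1 else 0.

Lemma shift_coord (x : 'rV[F]_n.+1) (l : 'I_n.+1) :
  (x *m shiftm) 0 l = if (l : nat) is l'.+1 then x 0 (inord l') else 0.
Proof.
rewrite mxE; case: l => [[|l'] Hl] /=.
  by apply: big1 => i _; rewrite mxE /= mulr0.
have Hl2 : (l' < n.+1)%N by apply: ltnW.
rewrite (bigD1 (inord l')) //= addrC big1 ?add0r; last first.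
  move=> i ne; rewrite mxE /= eqSS.
  case: eqP => [E|]; last by rewrite mulr0.
  by move: ne; rewrite -(inj_eq val_inj) /= inordK // E eqxx.
by rewrite mxE /= inordK ?eqxx ?mulr1.
Qed.

Lemma shift00 (y : 'rV[F]_n.+1) : (y *m shiftm) 0 0 = 0.
Proof. by rewrite shift_coord. Qed.

Lemma amul_mu0 (x y : 'rV[F]_n.+1) : amul mu0 x y = y 0 0 *: (x *m shiftm).
Proof.
apply/rowP => k; rewrite !mxE mulr_sumr; apply: eq_bigr => i _.
rewrite (bigD1 0) //= addrC big1 ?add0r; last first.
  by move=> j ne; rewrite /mu0 /=; case: eqP => [E|] /=;
    [by move: ne; rewrite -(inj_eq val_inj) /= E | by rewrite mulr0].
by rewrite /mu0 /= mxE; case: eqP => _; rewrite ?mulr1 ?mulr0 // mulrC.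
Qed.

Lemma mu0_leibniz : is_leibniz mu0.
Proof.
move=> x y z _ _ _; rewrite !amul_mu0.
rewrite [(_ *: (y *m _)) 0 0]mxE shift00 mulr0 scale0r addr0.
by rewrite -!scalemxAl !scalerA mulrC.
Qed.

Definition xp m (mu : strconst F m) (a : 'rV[F]_m) k := iter k (fun w => amul mu w a) a.

Lemma xp_mu0 k (l : 'I_n.+1) : xp mu0 (delta_mx 0 0) k 0 l = ((l : nat) == k)%:R.
Proof.
elim: k l => [|k IH] l.
  by rewrite mxE /=; case: l.
have -> : xp mu0 (delta_mx 0 0) k.+1 = amul mu0 (xp mu0 (delta_mx 0 0) k) (delta_mx 0 0) by [].
rewrite amul_mu0 mxE [delta_mx _ _ _ _]mxE eqxx /= mul1r shift_coord.
case: l => [[|l'] Hl] //=.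
by rewrite IH inordK // ltnW.
Qed.

Lemma is_product_pos m (mu : strconst F m) k v : is_product mu k v -> (0 < k)%N.
Proof. by elim => // k1 l x y _ H1 _ _; rewrite addn_gt0 H1. Qed.

Lemma mu0_prod k v : is_product mu0 k v -> forall l : 'I_n.+1, (l.+2 <= k)%N -> v 0 l = 0.
Proof.
elim => [x l|k1 l1 x y Px IHx Py IHy l Hl]; first by [].
have l1p := is_product_pos Py.
rewrite amul_mu0 mxE shift_coord.
case: (ltnP 1 l1) => H.
  by rewrite (IHy 0) ?mul0r.
have El1 : l1 = 1%N by apply/eqP; rewrite eqn_leq H l1p.
move: Hl; rewrite El1 addn1.
case: l => [[|l'] Hl'] //= Hle; rewrite ?mulr0 //.
by rewrite IHx ?mulr0 // inordK // (ltn_trans _ Hl').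
Qed.

Lemma mu0_nil : nilMonoLeib mu0.
Proof.
split.
  exists n.+2; split => // v Pv; apply/rowP => l; rewrite mxE.
  by rewrite (mu0_prod Pv) // ltnS.
by move=> a x y z _ _ _; apply: mu0_leibniz.
Qed.

End Mu0.
Arguments shiftm {F n}. Arguments mu0 {F n}.
Section Hard.
Variable F : fieldType.
Variable d : nat.
Variable nu : strconst F d.
Variable a : 'rV[F]_d.

Local Notation x k := (xp nu a k).

Lemma xpS k : x k.+1 = amul nu (x k) a. Proof. by []. Qed.

Lemma xp_gen k : gen_subalg nu a (x k).
Proof.
move=> S [_ _ _ HM] Sa; elim: k => [|k IH] //.
by rewrite xpS; apply: HM.
Qed.

Lemma xp_zero N : x N = 0 -> forall k, (N <= k)%N -> x k = 0.
Proof.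
move=> H0 k; elim: k => [|k IH]; first by rewrite leqn0 => /eqP E; subst N.
rewrite leq_eqVlt => /orP [/eqP E|Hk]; first by subst N.
by rewrite xpS IH // amul0l.
Qed.

Lemma iter_lin m p (c : 'I_p -> F) (v : 'I_p -> 'rV[F]_d) :
  iter m (fun w => amul nu w a) (\sum_i c i *: v i)
  = \sum_i c i *: iter m (fun w => amul nu w a) (v i).
Proof.
elim: m => [//|m IH] /=; rewrite IH amul_suml; apply: eq_bigr => i _.
by rewrite amulZl.
Qed.

Lemma iter_xp m i : iter m (fun w => amul nu w a) (x i) = x (m + i).
Proof. by rewrite /xp iterD. Qed.

Definition xmat N : 'M[F]_(N.+1, d) := \matrix_(i, l) x i 0 l.

Lemma row_xmat N i : row i (xmat N) = x i.
Proof. by apply/rowP => l; rewrite !mxE. Qed.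

Lemma xmat_free N : x N != 0 -> x N.+1 = 0 -> row_free (xmat N).
Proof.
move=> HN HN1; apply: inj_row_free => c Hc.
have key : forall p, (p <= N.+1)%N -> forall i : 'I_N.+1, (i < p)%N -> c 0 i = 0.
  elim => [//|p IH] Hp i Hi.
  have Hp' : (p < N.+1)%N by [].
  move: Hi; rewrite ltnS leq_eqVlt => /orP [/eqP Ei|Hi]; last by apply: IH => //; apply: ltnW.
  have := congr1 (iter (N - p)%N (fun w => amul nu w a)) Hc.
  rewrite mulmx_sum_row iter_lin.
  have -> : iter (N - p)%N (fun w => amul nu w a) 0 = 0 :> 'rV[F]_d.
    by elim: (N - p)%N => [//|m IHm] /=; rewrite IHm amul0l.
  rewrite (bigD1 i) //= big1 ?addr0; last first.
    move=> j ne; rewrite row_xmat iter_xp.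
    case: (ltnP j p) => Hj; first by rewrite IH ?scale0r // ltnW.
    rewrite (xp_zero HN1) ?scaler0 //.
    have : (p < j)%N by rewrite ltn_neqAle Hj andbT -Ei; apply: contra ne => /eqP E; apply/eqP/val_inj.
    move=> Hpj; move: Hpj Hp'; clear; lia.
  rewrite row_xmat iter_xp Ei subnK; last by rewrite -ltnS.
  by move/eqP; rewrite scaler_eq0 (negbTE HN) orbF => /eqP.
by apply/rowP => i; rewrite mxE (key N.+1).
Qed.

Lemma xp_bound N : x N != 0 -> x N.+1 = 0 -> (N < d)%N.
Proof.
move=> H1 H2; have := xmat_free H1 H2; rewrite /row_free => /eqP <-.
exact: rank_leq_col.
Qed.

Lemma xp_bound2 dd : forall N, x (N + dd) = 0 -> x N != 0 -> (N < d)%N.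
Proof.
elim: dd => [|dd IH] N; first by rewrite addn0 => ->; rewrite eqxx.
move=> H HN; case: (boolP (x N.+1 == 0)) => [/eqP|] H1; first exact: xp_bound.
by apply: ltnW; apply: IH; rewrite // addSnnS.
Qed.

Lemma xp_prod k : is_product nu k.+1 (x k).
Proof.
elim: k => [|k IH]; first exact: prod_leaf.
rewrite xpS -addn1; exact: prod_node IH (prod_leaf _ _).
Qed.

Lemma xp_nil : is_nilpotent nu -> exists m, x m = 0.
Proof.
move=> [m [m0 H]]; exists m.-1; apply: H.
by rewrite -{1}(prednK m0); apply: xp_prod.
Qed.

Hypothesis Leib : is_leibniz_on nu (gen_subalg nu a).

Lemma xp_rel j : (0 < j)%N -> forall i, amul nu (x i) (x j) = 0.
Proof.
elim: j => [//|j IH] _ i.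
have L := Leib (xp_gen i) (xp_gen j) (xp_gen 0).
rewrite -!xpS in L.
case: j IH L => [|j] IH L.
  move: L; rewrite /= -xpS => /(congr1 (fun w => w - x i.+2)).
  by rewrite subrr addrAC subrr add0r => <-.
rewrite IH // amul0l (IH _ i.+1) // add0r in L.
by rewrite -L.
Qed.

End Hard.
Section Main.
Variable F : fieldType.
Variable n : nat.

Lemma xp_gl m g (mu : strconst F m) u k : g \in unitmx ->
  xp (gl_act g mu) (u *m g) k = xp mu u k *m g.
Proof.
move=> gU; elim: k => [//|k IH]; by rewrite xpS IH amul_gl_unit.
Qed.

Lemma shift_xmat (nu : strconst F n.+1) a i :
  xp nu a n.+1 = 0 -> row i shiftm *m xmat nu a n = xp nu a i.+1.
Proof.
move=> H; apply/rowP => l; rewrite mxE.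
case: (ltnP i.+1 n.+1) => Hi.
  rewrite (bigD1 (Ordinal Hi)) //= big1 ?addr0; last first.
    move=> k ne; rewrite !mxE; case: eqP => [E|]; last by rewrite mul0r.
    by move: ne; rewrite -(inj_eq val_inj) /= E eqxx.
  by rewrite !mxE eqxx mul1r.
have Ei : i.+1 = n.+1 by apply/eqP; rewrite eqn_leq Hi ltn_ord.
rewrite Ei H mxE big1 // => k _; rewrite !mxE.
by rewrite (_ : (k == i.+1 :> nat) = false) ?mul0r // Ei ltn_eqF.
Qed.

Lemma orbit_iff (nu : strconst F n.+1) : nilMonoLeib nu ->
  (Defs.orbit mu0 nu <-> exists a, xp nu a n != 0).
Proof.
move=> [nilp mono]; split.
  move=> [g gU ->]; exists (delta_mx 0 0 *m g); rewrite xp_gl //.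
  apply/negP => /eqP H.
  have : xp (@mu0 F n) (delta_mx 0 0) n = 0.
    by apply/eqP; rewrite -(inj_eq (can_inj (mulmxK gU))) H mul0mx.
  move/(congr1 (fun w : 'rV[F]_n.+1 => w 0 ord_max)); rewrite xp_mu0 mxE /= eqxx.
  by move/eqP; rewrite oner_eq0.
move=> [a Ha].
have Leib := mono a.
have [m Hm] := xp_nil a nilp.
have Hn1 : xp nu a n.+1 = 0.
  apply/eqP; apply: contraT => H.
  have := @xp_bound2 _ _ nu a m n.+1 (xp_zero Hm (leq_addl _ _)) H.
  by rewrite ltnn.
have PU : xmat nu a n \in unitmx by rewrite -row_free_unit; apply: xmat_free.
exists (xmat nu a n) => //; apply: gl_charac => // i j.
rewrite !row_xmat !row1 amul_mu0 -rowE -scalemxAl shift_xmat //.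
have [Hj|Hj] := posnP j.
  have -> : j = 0 by apply/val_inj.
  by rewrite mxE eqxx scale1r.
rewrite xp_rel // mxE /= (_ : (0 == j) = false) ?scale0r //.
by apply/negbTE; rewrite -(inj_eq val_inj) /= eq_sym -lt0n.
Qed.

End Main.
From mathcomp Require Import mpoly.
Section Zar.
Variable R : nzRingType.
Definition amulR m (mu : prod (prod 'I_m 'I_m) 'I_m -> R) (x y : 'rV[R]_m) : 'rV[R]_m :=
  \row_k \sum_(i < m) \sum_(j < m) x 0 i * y 0 j * mu (i, j, k).
Definition xpR m mu (a : 'rV[R]_m) k := iter k (fun w => amulR mu w a) a.
End Zar.

Lemma meval_amulR (F : fieldType) N m (v : 'I_N -> F) mu (x y : 'rV[mpoly.mpoly N F]_m) :
  map_mx (mpoly.meval v) (amulR mu x y) =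
  amulR (fun t => mpoly.meval v (mu t)) (map_mx (mpoly.meval v) x) (map_mx (mpoly.meval v) y).
Proof.
apply/rowP => k; rewrite !mxE rmorph_sum; apply: eq_bigr => i _.
rewrite rmorph_sum; apply: eq_bigr => j _; rewrite !rmorphM !mxE.
by [].
Qed.

Lemma meval_xpR (F : fieldType) N m (v : 'I_N -> F) mu (a : 'rV[mpoly.mpoly N F]_m) k :
  map_mx (mpoly.meval v) (xpR mu a k) =
  xpR (fun t => mpoly.meval v (mu t)) (map_mx (mpoly.meval v) a) k.
Proof. by elim: k => [//|k IH] /=; rewrite meval_amulR IH. Qed.

Section Final.
Variable F : fieldType.
Variable n : nat.
Local Notation T := (prod (prod 'I_n.+1 'I_n.+1) 'I_n.+1).

Definition muX (t : T) : mpoly.mpoly #|{: T}| F := 'X_(enum_rank t).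

Lemma eval_S (nu : strconst F n.+1) a k l :
  mpoly.meval (coords nu) (xpR muX (map_mx (fun c => c%:MP) a) k 0 l) = xp nu a k 0 l.
Proof.
have -> : mpoly.meval (coords nu) (xpR muX (map_mx (fun c => c%:MP) a) k 0 l)
  = map_mx (mpoly.meval (coords nu)) (xpR muX (map_mx (fun c => c%:MP) a) k) 0 l.
  by rewrite mxE.
rewrite meval_xpR.
have -> : (fun t => mpoly.meval (coords nu) (muX t)) = nu.
  by apply: functional_extensionality => t; rewrite /muX mevalXU /coords enum_rankK.
have -> : map_mx (mpoly.meval (coords nu)) (map_mx (fun c => c%:MP) a) = a.
  by apply/rowP => j; rewrite !mxE mevalC.
by [].
Qed.

Lemma main_gen : exists mu : strconst F n.+1,
    nilMonoLeib mu /\ rigid_in (nilMonoLeib (n := n.+1)) mu.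
Proof.
exists mu0; split; first exact: mu0_nil.
exists (fun p => exists (a : 'rV[F]_n.+1) (k : 'I_n.+1),
          p = xpR muX (map_mx (fun c => c%:MP) a) n 0 k).
move=> nu Xnu; rewrite orbit_iff //; split.
  move=> H p [a [k ->]]; rewrite eval_S.
  have -> : xp nu a n = 0.
    by apply/eqP; apply: contraT => Hne; exfalso; apply: H; exists a.
  by rewrite mxE.
move=> Hz [a Ha]; apply: (negP Ha); apply/eqP/rowP => k.
have := Hz _ (ex_intro _ a (ex_intro _ k erefl)); rewrite eval_S => ->.
by rewrite mxE.
Qed.

End Final.

Import complex.

Theorem mainTheorem8 (R : realType) (n : nat) : (0 < n)%N ->
  exists mu : strconst R[i] n,
    nilMonoLeib mu /\ rigid_in (nilMonoLeib (n := n)) mu.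
Proof.
by case: n => [//|n] _; apply: main_gen.
Qed.
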